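(* Let $d\ge 2$, $k\ge 2$ and $n>d$ be integers. Then $$m^*(n,d,k)\le \min_{\substack{2\le i\le\lceil n/2\rceil\\ k_1,k_2\ge 1,\ k_1+k_2=k}}\Big\{m^*\big(\lceil n/i\rceil,d,k_2\big)+i\cdot m^*\big(\lceil n/i\rceil,\lfloor d/2\rfloor,k_1\big)\Big\}.$$
   Context: For a binary matrix $M$ and a nonempty set $S$ of its columns, $S$ is a stopping set if the submatrix formed by $S$ has no row with exactly one $1$; the stopping distance $s(M)$ is the minimum size of a stopping set ($+\infty$ if none). For positive integers $d,k$, $M$ is $(d,k)$-decodable if $s(M)\ge d+1$ and every column of $M$ has exactly $k$ ones. For positive integers $n,d,k$ (with $d$ possibly exceeding $n$), $m^*(n,d,k)$ is the minimum $m$ such that an $m\times n$ $(d,k)$-decodable binary matrix exists. *)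

(* Defs.v *)
From mathcomp Require Import all_boot all_algebra.
From mathcomp Require Import zify.

Set Implicit Arguments.
Unset Strict Implicit.
Unset Printing Implicit Defensive.

Definition stopping_set (m n : nat) (M : 'M[bool]_(m, n)) (S : {set 'I_n}) : bool :=
  (S != set0) && [forall i : 'I_m, #|[set j in S | M i j]| != 1].

(* s(M) >= t : every stopping set has size >= t (this is exactly
   min{|S| : S stopping} >= t, with min of the empty family = +oo). *)
Definition stopping_distance_ge (m n : nat) (M : 'M[bool]_(m, n)) (t : nat) : bool :=
  [forall S : {set 'I_n}, stopping_set M S ==> (t <= #|S|)].

Definition decodable (m n : nat) (M : 'M[bool]_(m, n)) (d k : nat) : bool :=
  stopping_distance_ge M d.+1 && [forall j : 'I_n, #|[set i | M i j]| == k].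

Definition decodable_exists (n d k m : nat) : bool :=
  [exists M : 'M[bool]_(m, n), decodable M d k].

(* Existence for k >= 1: give each column k private rows. *)
Lemma decodable_exists_some (n d k : nat) :
  exists m, decodable_exists n d k m || (k == 0).
Proof.
case: k => [|k]; first by exists 0; rewrite orbT.
exists (n * k.+1); rewrite orbF; apply/existsP.
exists (\matrix_(i < n * k.+1, j < n) (i %/ k.+1 == j)%N)%R.
apply/andP; split.
- apply/forallP => S; apply/implyP => /andP [/set0Pn [j0 Hj0] /forallP HS].
  have Hlt : j0 * k.+1 < n * k.+1 by rewrite ltn_pmul2r.
  have := HS (Ordinal Hlt).
  suff -> : [set j in S | (\matrix_(i < n * k.+1, j < n) (i %/ k.+1 == j)%N)%R
              (Ordinal Hlt) j] = [set j0] by rewrite cards1.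
  apply/setP => j; rewrite !inE mxE /= mulnK //.
  case: (eqVneq j0 j) => [<-|Hne]; first by rewrite Hj0 eqxx.
  by apply/andP => -[_ /eqP /val_inj E]; rewrite E eqxx in Hne.
- apply/forallP => j.
  have Hf : forall r : 'I_k.+1, j * k.+1 + r < n * k.+1.
    move=> r; have := ltn_ord r; have := ltn_ord j; nia.
  have -> : [set i | (\matrix_(i < n * k.+1, j < n) (i %/ k.+1 == j)%N)%R i j]
          = [set Ordinal (Hf r) | r : 'I_k.+1].
    apply/setP => i; rewrite inE mxE.
    apply/eqP/imsetP => [E|[r _ ->]].
    + exists (Ordinal (ltn_pmod i (ltn0Sn k))) => //.
      by apply: val_inj => /=; rewrite -E -divn_eq.
    + by rewrite divnDl ?dvdn_mull // mulnK // divn_small // addn0.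
  rewrite card_imset ?card_ord //.
  by move=> r1 r2 /(congr1 val) /= /eqP; rewrite eqn_add2l => /eqP /val_inj.
Qed.

(* m^*(n,d,k): the minimum m such that an m x n (d,k)-decodable matrix
   exists.  (For k = 0 no such matrix exists; the value is then 0 by
   convention, a case never used below.) *)
Definition m_star (n d k : nat) : nat := ex_minn (decodable_exists_some n d k).

Definition ceil_div (n i : nat) : nat := (n + i.-1) %/ i.

(* Main.v *)
Require Import Defs.
From mathcomp Require Import all_boot all_algebra.
From mathcomp Require Import zify.

Set Implicit Arguments.
Unset Strict Implicit.
Unset Printing Implicit Defensive.

Lemma m_star_spec n d k : 0 < k -> decodable_exists n d k (m_star n d k).
Proof.
move=> k0; rewrite /m_star; case: ex_minnP => m Hm _.
by case/orP: Hm => // /eqP E; rewrite E in k0.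
Qed.

Lemma m_star_min n d k m : decodable_exists n d k m -> m_star n d k <= m.
Proof.
move=> H; rewrite /m_star; case: ex_minnP => m0 _ Hmin.
by apply: Hmin; rewrite H.
Qed.

Lemma card_sumT (T1 T2 : finType) (P : pred (T1 + T2)) :
  #|[set y | P y]| = #|[set a | P (inl a)]| + #|[set b | P (inr b)]|.
Proof.
have -> : [set y | P y] = inl @: [set a | P (inl a)] :|: inr @: [set b | P (inr b)].
  apply/setP => -[a|b]; rewrite !inE.
  - apply/idP/orP => [H|[/imsetP [a' Ha' [->]]|/imsetP [? _ //]]]; last by rewrite inE in Ha'.
    by left; apply: imset_f; rewrite inE.
  - apply/idP/orP => [H|[/imsetP [? _ //]|/imsetP [b' Hb' [->]]]]; last by rewrite inE in Hb'.
    by right; apply: imset_f; rewrite inE.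
rewrite cardsU.
have -> : inl @: [set a | P (inl a)] :&: inr @: [set b | P (inr b)] = set0.
  apply/setP => y; rewrite !inE; apply/andP => -[/imsetP [a _ ->] /imsetP [b _ //]].
rewrite cards0 subn0 !card_imset //; by move=> x y [].
Qed.

Lemma transfer (R : finType) n d k (F : R -> 'I_n -> bool) :
  (forall S : {set 'I_n}, S != set0 ->
     (forall x, #|[set j in S | F x j]| != 1) -> d < #|S|) ->
  (forall j, #|[set x | F x j]| = k) ->
  decodable_exists n d k #|R|.
Proof.
move=> HS Hc; apply/existsP.
exists (\matrix_(x, j) F (enum_val x) j)%R; apply/andP; split.
- apply/forallP => S; apply/implyP => /andP [S0 /forallP HSt].
  apply: (HS S S0) => x; have := HSt (enum_rank x).
  suff -> : [set j in S | F x j] = [set j in S | (\matrix_(x, j) F (enum_val x) j)%R (enum_rank x) j] by [].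
  by apply/setP => j; rewrite !inE mxE enum_rankK.
- apply/forallP => j; rewrite -(Hc j).
  have -> : [set x | F x j] = (fun x : 'I_#|R| => enum_val x) @: [set x : 'I_#|R| | (\matrix_(x, j) F (enum_val x) j)%R x j].
    apply/setP => y; rewrite inE; apply/idP/imsetP => [H|[x]]; last by rewrite inE mxE => H ->.
    by exists (enum_rank y); rewrite ?inE ?mxE enum_rankK.
  by rewrite card_imset //; apply: enum_val_inj.
Qed.

Theorem theorem5p6 (n d k : nat) :
  2 <= d -> 2 <= k -> d < n ->
  forall i k1 k2 : nat,
    2 <= i -> i <= ceil_div n 2 ->
    1 <= k1 -> 1 <= k2 -> k1 + k2 = k ->
    m_star n d k <=
      m_star (ceil_div n i) d k2 + i * m_star (ceil_div n i) (d %/ 2) k1.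
Proof.
move=> d2 k2' dn i k1 k2 i2 iN k1p k2p kE.
set N := ceil_div n i.
have HN : 0 < N by rewrite /N /ceil_div divn_gt0; lia.
have HiN : n <= i * N.
  have := divn_eq (n + i.-1) i; have := @ltn_pmod (n + i.-1) i ltac:(lia).
  rewrite /N /ceil_div; nia.
set m2 := m_star N d k2; set m1 := m_star N (d %/ 2) k1.
have /existsP [A /andP [hA1 /forallP hA2]] := m_star_spec N d k2p.
have /existsP [B /andP [hB1 /forallP hB2]] := m_star_spec N (d %/ 2) k1p.
pose rj (j : 'I_n) : 'I_N := Ordinal (ltn_pmod j HN).
have gj_lt : forall j : 'I_n, j %/ N < i.
  move=> j; rewrite ltn_divLR //; have := ltn_ord j; lia.
pose gj (j : 'I_n) : 'I_i := Ordinal (gj_lt j).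
have hinj : forall j j', gj j = gj j' -> rj j = rj j' -> j = j'.
  move=> j j' /(congr1 val) /= E1 /(congr1 val) /= E2; apply: val_inj.
  by rewrite /= (divn_eq j N) (divn_eq j' N) E1 E2.
pose F (y : ('I_m2 + 'I_i * 'I_m1)%type) (j : 'I_n) : bool :=
  match y with inl a => A a (rj j) | inr p => (p.1 == gj j) && B p.2 (rj j) end.
have cardR : #|{: 'I_m2 + 'I_i * 'I_m1}| = m2 + i * m1
  by rewrite card_sum card_prod !card_ord.
apply: m_star_min; rewrite -cardR -kE.
apply: (@transfer _ n d (k1 + k2) F).
- move=> S /set0Pn [j0 Hj0] HS.
  pose Sg g := [set j in S | gj j == g].
  have hblk : forall g, Sg g != set0 -> d %/ 2 < #|Sg g|.
    move=> g Hne.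
    have injS : {in Sg g &, injective rj}.
      move=> x y; rewrite !inE => /andP [_ /eqP gx] /andP [_ /eqP gy] E.
      by apply: hinj => //; rewrite gx gy.
    rewrite -(card_in_imset injS).
    have := (forallP hB1) (rj @: Sg g); move/implyP; apply.
    apply/andP; split; first by rewrite imset_eq0.
    apply/forallP => b.
    have E1 : [set r in rj @: Sg g | B b r] = rj @: [set j in Sg g | B b (rj j)].
      apply/setP => r; rewrite inE; apply/andP/imsetP => [[/imsetP [j Hj ->] Hb]|[j]].
        by exists j => //; rewrite inE Hj.
      by rewrite inE => /andP [Hj Hb] ->; split => //; apply: imset_f.
    have E2 : [set j in S | F (inr (g, b)) j] = [set j in Sg g | B b (rj j)].
      by apply/setP => j; rewrite !inE /= eq_sym andbA.
    rewrite E1 card_in_imset; first by rewrite -E2; apply: HS.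
    move=> x y; rewrite !inE => /andP [/andP [_ /eqP gx] _] /andP [/andP [_ /eqP gy] _] E.
    by apply: hinj => //; rewrite gx gy.
  case: (boolP [exists j in S, gj j != gj j0]) => [/existsP [j1 /andP [Hj1 Hg]]|Hall].
    have h0 := hblk (gj j0) ltac:(by apply/set0Pn; exists j0; rewrite inE Hj0 eqxx).
    have h1 := hblk (gj j1) ltac:(by apply/set0Pn; exists j1; rewrite inE Hj1 eqxx).
    have hsub : #|Sg (gj j0) :|: Sg (gj j1)| <= #|S|.
      apply: subset_leq_card; rewrite subUset; apply/andP; split;
        by apply/subsetP => j; rewrite inE => /andP [].
    have hI : Sg (gj j0) :&: Sg (gj j1) = set0.
      apply/setP => j; rewrite !inE; apply/negP => /andP [/andP [_ /eqP e0] /andP [_ /eqP e1]].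
      by rewrite -e0 -e1 eqxx in Hg.
    move: hsub; rewrite cardsU hI cards0 subn0.
    have := divn_eq d 2; have := @ltn_pmod d 2 isT; lia.
  have Hg : forall j, j \in S -> gj j = gj j0.
    move=> j Hj; move: Hall; apply: contraNeq => H; apply/existsP; exists j; by rewrite Hj H.
  have injS : {in S &, injective rj}.
    by move=> x y Hx Hy E; apply: hinj => //; rewrite (Hg x Hx) (Hg y Hy).
  rewrite -(card_in_imset injS).
  have := (forallP hA1) (rj @: S); move/implyP; apply.
  apply/andP; split; first by rewrite imset_eq0; apply/set0Pn; exists j0.
  apply/forallP => a.
  have E1 : [set r in rj @: S | A a r] = rj @: [set j in S | A a (rj j)].
    apply/setP => r; rewrite inE; apply/andP/imsetP => [[/imsetP [j Hj ->] Hb]|[j]].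
      by exists j => //; rewrite inE Hj.
    by rewrite inE => /andP [Hj Hb] ->; split => //; apply: imset_f.
  rewrite E1 card_in_imset; first by apply: (HS (inl a)).
  by move=> x y; rewrite !inE => /andP [Hx _] /andP [Hy _]; apply: injS.
- move=> j; rewrite card_sumT /= (eqP (hA2 (rj j))) addnC; congr (_ + _).
  have -> : [set b : 'I_i * 'I_m1 | (b.1 == gj j) && B b.2 (rj j)]
          = pair (gj j) @: [set b | B b (rj j)].
    apply/setP => -[g b]; rewrite !inE /=.
    apply/andP/imsetP => [[/eqP -> H]|[b' Hb' [-> ->]]].
      by exists b; rewrite ?inE.
    by rewrite inE in Hb'.
  rewrite card_imset; first exact: (eqP (hB2 (rj j))).
  by move=> x y [].
Qed.
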